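(* Let $(X,d)$ be a compact metric space and let $f\in\mathcal{H}(X)$ be equicontinuous. If $f$ has the strict periodic shadowing property, then $f$ is topologically stable and $\dim X=0$.
   Context: $\mathcal{H}(X)$ is the set of homeomorphisms; $d_{C^0}(f,g)=\sup_x d(f(x),g(x))$; $D(f,g)=\max\{d_{C^0}(f,g),d_{C^0}(f^{-1},g^{-1})\}$. $f$ is equicontinuous if for every $\epsilon>0$ there is $\delta>0$ such that $d(x,y)\le\delta$ implies $\sup_{i\in\mathbb{Z}}d(f^i(x),f^i(y))\le\epsilon$. A $\delta$-cycle is a sequence $(x_i)_{i=0}^m$, $m\ge1$, with $d(f(x_i),x_{i+1})\le\delta$ for $0\le i<m$ and $x_0=x_m$. $f$ has the strict periodic shadowing property if for every $\epsilon>0$ there is $\delta>0$ such that for every $\delta$-cycle $(x_i)_{i=0}^m$ there is $p$ with $f^m(p)=p$ and $d(x_i,f^i(p))\le\epsilon$ for $0\le i\le m$. $f$ is topologically stable if for every $\epsilon>0$ there is $\delta>0$ such that for every $g\in\mathcal{H}(X)$ with $D(f,g)<\delta$ there is a continuous $h:X\to X$ with $d_{C^0}(h,\mathrm{id}_X)<\epsilon$ and $h\circ g=f\circ h$. *)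

(* Defs.v *)
From Stdlib Require Import Reals List ZArith.
Open Scope R_scope.

Set Implicit Arguments.

Definition is_metric (X : Type) (d : X -> X -> R) : Prop :=
  (forall x y, 0 <= d x y) /\
  (forall x y, d x y = 0 <-> x = y) /\
  (forall x y, d x y = d y x) /\
  (forall x y z, d x z <= d x y + d y z).

Definition is_open (X : Type) (d : X -> X -> R) (U : X -> Prop) : Prop :=
  forall x, U x -> exists r, 0 < r /\ forall y, d x y < r -> U y.

Definition is_compact (X : Type) (d : X -> X -> R) : Prop :=
  forall (I : Type) (U : I -> X -> Prop),
    (forall i, is_open d (U i)) ->
    (forall x, exists i, U i x) ->
    exists l : list I, forall x, exists i, In i l /\ U i x.

Definition continuous_map (X : Type) (d : X -> X -> R) (h : X -> X) : Prop :=
  forall x eps, 0 < eps -> exists delta, 0 < delta /\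
    forall y, d x y < delta -> d (h x) (h y) < eps.

Record homeo (X : Type) (d : X -> X -> R) := Homeo {
  hmap : X -> X;
  hinv : X -> X;
  hinv_l : forall x, hinv (hmap x) = x;
  hinv_r : forall x, hmap (hinv x) = x;
  hmap_cont : continuous_map d hmap;
  hinv_cont : continuous_map d hinv
}.

Definition ziter (X : Type) (d : X -> X -> R) (f : homeo d) (i : Z) : X -> X :=
  match i with
  | Z0 => fun x => x
  | Zpos p => Nat.iter (Pos.to_nat p) (hmap f)
  | Zneg p => Nat.iter (Pos.to_nat p) (hinv f)
  end.

Definition is_dC0 (X : Type) (d : X -> X -> R) (u v : X -> X) (s : R) : Prop :=
  is_lub (fun r => exists x, r = d (u x) (v x)) s.

Definition dC0_lt (X : Type) (d : X -> X -> R) (u v : X -> X) (eps : R) : Prop :=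
  exists s, is_dC0 d u v s /\ s < eps.

Definition Dhomeo_lt (X : Type) (d : X -> X -> R) (f g : homeo d) (delta : R) : Prop :=
  exists s1 s2, is_dC0 d (hmap f) (hmap g) s1 /\
                is_dC0 d (hinv f) (hinv g) s2 /\ Rmax s1 s2 < delta.

Definition equicontinuous (X : Type) (d : X -> X -> R) (f : homeo d) : Prop :=
  forall eps, 0 < eps -> exists delta, 0 < delta /\
    forall x y, d x y <= delta -> forall i : Z, d (ziter f i x) (ziter f i y) <= eps.

Definition is_delta_cycle (X : Type) (d : X -> X -> R) (f : homeo d) (delta : R)
  (x : nat -> X) (m : nat) : Prop :=
  (1 <= m)%nat /\
  (forall i, (i < m)%nat -> d (hmap f (x i)) (x (S i)) <= delta) /\
  x 0%nat = x m.

Definition strict_periodic_shadowing (X : Type) (d : X -> X -> R) (f : homeo d) : Prop :=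
  forall eps, 0 < eps -> exists delta, 0 < delta /\
    forall (x : nat -> X) (m : nat), is_delta_cycle f delta x m ->
      exists p, Nat.iter m (hmap f) p = p /\
        forall i, (i <= m)%nat -> d (x i) (Nat.iter i (hmap f) p) <= eps.

Definition topologically_stable (X : Type) (d : X -> X -> R) (f : homeo d) : Prop :=
  forall eps, 0 < eps -> exists delta, 0 < delta /\
    forall g : homeo d, Dhomeo_lt f g delta ->
      exists h : X -> X, continuous_map d h /\ dC0_lt d h (fun x => x) eps /\
        forall x, h (hmap g x) = hmap f (h x).

(** Lebesgue covering dimension <= 0: every finite open cover has a finite open
    refinement consisting of pairwise disjoint sets (order <= 0). *)
Definition covering_dim_le0 (X : Type) (d : X -> X -> R) : Prop :=
  forall cover : list (X -> Prop),
    (forall U, In U cover -> is_open d U) ->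
    (forall x, exists U, In U cover /\ U x) ->
    exists refn : list (X -> Prop),
      (forall V, In V refn -> is_open d V) /\
      (forall x, exists V, In V refn /\ V x) /\
      (forall V, In V refn -> exists U, In U cover /\ forall x, V x -> U x) /\
      (forall i j x, (i < length refn)%nat -> (j < length refn)%nat -> i <> j ->
         nth i refn (fun _ => False) x -> nth j refn (fun _ => False) x -> False).

(** dim X = 0: dim X <= 0 and X nonempty (dim X = -1 iff X is empty). *)
Definition dim_eq0 (X : Type) (d : X -> X -> R) : Prop :=
  covering_dim_le0 d /\ inhabited X.

(* Main.v *)
Require Import Defs.
From Stdlib Require Import Reals List ZArith.
From Stdlib Require Import Lra Lia Classical ClassicalEpsilon PropExtensionality FunctionalExtensionality.
Open Scope R_scope.
Set Implicit Arguments.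

Lemma ziter_pos (X : Type) (d : X -> X -> R) (f : homeo d) n a :
  ziter f (Z.of_nat n) a = Nat.iter n (hmap f) a.
Proof.
  destruct n as [|n]; [reflexivity|].
  simpl. rewrite SuccNat2Pos.id_succ. reflexivity.
Qed.

Lemma ziter_neg (X : Type) (d : X -> X -> R) (f : homeo d) n a :
  ziter f (- Z.of_nat n)%Z a = Nat.iter n (hinv f) a.
Proof.
  destruct n as [|n]; [reflexivity|].
  simpl. rewrite SuccNat2Pos.id_succ. reflexivity.
Qed.

Lemma iter_inv_l (X : Type) (d : X -> X -> R) (f : homeo d) n a :
  Nat.iter n (hinv f) (Nat.iter n (hmap f) a) = a.
Proof.
  induction n as [|n IH]; [reflexivity|].
  rewrite Nat.iter_succ_r. simpl. rewrite hinv_l. exact IH.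
Qed.

Lemma iter_inv_r (X : Type) (d : X -> X -> R) (f : homeo d) n a :
  Nat.iter n (hmap f) (Nat.iter n (hinv f) a) = a.
Proof.
  induction n as [|n IH]; [reflexivity|].
  rewrite Nat.iter_succ_r. simpl. rewrite hinv_r. exact IH.
Qed.

Lemma ziter_back (X : Type) (d : X -> X -> R) (f : homeo d) n a :
  ziter f (- Z.of_nat n)%Z (Nat.iter n (hmap f) a) = a.
Proof. rewrite ziter_neg. apply iter_inv_l. Qed.

Lemma iter_add (A : Type) (g : A -> A) m n a :
  Nat.iter (m + n) g a = Nat.iter m g (Nat.iter n g a).
Proof. induction m; simpl; congruence. Qed.

Lemma Z_cases (i : Z) : exists n, (i = Z.of_nat n \/ i = - Z.of_nat (S n))%Z.
Proof.
  destruct (Z_le_gt_dec 0 i).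
  - exists (Z.to_nat i). left. lia.
  - exists (Z.to_nat (- i - 1)). right. lia.
Qed.

Lemma ziter_succ (X : Type) (d : X -> X -> R) (f : homeo d) i a :
  ziter f (Z.succ i) a = ziter f i (hmap f a).
Proof.
  destruct (Z_cases i) as [n [-> | ->]].
  - replace (Z.succ (Z.of_nat n)) with (Z.of_nat (S n))%Z by lia.
    rewrite !ziter_pos. apply Nat.iter_succ_r.
  - replace (Z.succ (- Z.of_nat (S n))) with (- Z.of_nat n)%Z by lia.
    rewrite !ziter_neg. rewrite Nat.iter_succ_r. rewrite hinv_l. reflexivity.
Qed.

Lemma ziter_hinv (X : Type) (d : X -> X -> R) (f : homeo d) i a :
  ziter f i (hinv f a) = ziter f (Z.pred i) a.
Proof.
  rewrite <- (Z.succ_pred i) at 1. rewrite ziter_succ, hinv_r. reflexivity.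
Qed.

Lemma d_refl (X : Type) (d : X -> X -> R) (Hm : is_metric d) a : d a a = 0.
Proof. destruct Hm as (_ & H & _). apply H. reflexivity. Qed.
Lemma d_sym (X : Type) (d : X -> X -> R) (Hm : is_metric d) a b : d a b = d b a.
Proof. destruct Hm as (_ & _ & H & _). apply H. Qed.
Lemma d_tri (X : Type) (d : X -> X -> R) (Hm : is_metric d) a b c : d a c <= d a b + d b c.
Proof. destruct Hm as (_ & _ & _ & H). apply H. Qed.
Lemma d_pos (X : Type) (d : X -> X -> R) (Hm : is_metric d) a b : 0 <= d a b.
Proof. destruct Hm as (H & _). apply H. Qed.

Definition close (X : Type) (d : X -> X -> R) (f : homeo d) (r : R) (x y : X) : Prop :=
  forall i : Z, d (ziter f i x) (ziter f i y) <= r.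

Lemma close_sym (X : Type) (d : X -> X -> R) (Hm : is_metric d) (f : homeo d) r x y :
  close f r x y -> close f r y x.
Proof. intros H i. rewrite d_sym by exact Hm. apply H. Qed.

Lemma close_f (X : Type) (d : X -> X -> R) (f : homeo d) r x y :
  close f r x y -> close f r (hmap f x) (hmap f y).
Proof. intros H i. rewrite <- !ziter_succ. apply H. Qed.

Lemma close_finv (X : Type) (d : X -> X -> R) (f : homeo d) r x y :
  close f r x y -> close f r (hinv f x) (hinv f y).
Proof. intros H i. rewrite !ziter_hinv. apply H. Qed.

Inductive ch (X : Type) (d : X -> X -> R) (f : homeo d) (r : R) : X -> X -> Prop :=
| ch_refl x : ch f r x x
| ch_step x y z : ch f r x y -> close f r y z -> ch f r x z.

Lemma ch_close (X : Type) (d : X -> X -> R) (f : homeo d) r x y :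
  close f r x y -> ch f r x y.
Proof. intros H. eapply ch_step; [apply ch_refl|exact H]. Qed.

Lemma ch_trans (X : Type) (d : X -> X -> R) (f : homeo d) r x y z :
  ch f r x y -> ch f r y z -> ch f r x z.
Proof. intros H1 H2. induction H2 as [|a b c H IH Hc]; [exact H1|]. exact (ch_step (IH H1) Hc). Qed.

Lemma ch_cons (X : Type) (d : X -> X -> R) (f : homeo d) r x y z :
  close f r x y -> ch f r y z -> ch f r x z.
Proof. intros H1 H2. eapply ch_trans; [apply ch_close; exact H1| exact H2]. Qed.

Lemma ch_sym (X : Type) (d : X -> X -> R) (Hm : is_metric d) (f : homeo d) r x y :
  ch f r x y -> ch f r y x.
Proof.
  intros H. induction H; [apply ch_refl|].
  eapply ch_cons; [apply close_sym; eauto| exact IHch].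
Qed.

Lemma ch_f (X : Type) (d : X -> X -> R) (f : homeo d) r x y :
  ch f r x y -> ch f r (hmap f x) (hmap f y).
Proof. intros H. induction H; [apply ch_refl|]. eapply ch_step; eauto. apply close_f; auto. Qed.

Lemma ch_finv (X : Type) (d : X -> X -> R) (f : homeo d) r x y :
  ch f r x y -> ch f r (hinv f x) (hinv f y).
Proof. intros H. induction H; [apply ch_refl|]. eapply ch_step; eauto. apply close_finv; auto. Qed.

Lemma ch_f_iff (X : Type) (d : X -> X -> R) (f : homeo d) r x y :
  ch f r (hmap f x) (hmap f y) <-> ch f r x y.
Proof.
  split; [|apply ch_f]. intros H. apply ch_finv in H. rewrite !hinv_l in H. exact H.
Qed.

Lemma ch_iter_iff (X : Type) (d : X -> X -> R) (f : homeo d) r n x y :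
  ch f r (Nat.iter n (hmap f) x) (Nat.iter n (hmap f) y) <-> ch f r x y.
Proof.
  induction n as [|n IH]; [tauto|]. simpl. rewrite ch_f_iff. exact IH.
Qed.

Lemma ch_seq (X : Type) (d : X -> X -> R) (f : homeo d) r x y :
  ch f r x y -> exists k (z : nat -> X), z O = x /\ z k = y /\
    forall j, (j < k)%nat -> close f r (z j) (z (S j)).
Proof.
  intros H. induction H as [x|x y w H IH Hc].
  - exists O, (fun _ => x). repeat split; auto. intros; lia.
  - destruct IH as (k & z & H0 & Hk & Hs).
    exists (S k), (fun j => if Nat.eqb j (S k) then w else z j).
    repeat split.
    + simpl. exact H0.
    + rewrite Nat.eqb_refl. reflexivity.
    + intros j Hj. destruct (Nat.eqb_spec j (S k)); [lia|].
      destruct (Nat.eqb_spec (S j) (S k)).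
      * assert (j = k) by lia. subst j. rewrite Hk. exact Hc.
      * apply Hs. lia.
Qed.

Lemma pigeon (A : Type) (l : list A) (P : nat -> A -> Prop) :
  (forall j, exists c, In c l /\ P j c) ->
  exists i j c, (i < j)%nat /\ P i c /\ P j c.
Proof.
  intros H.
  set (phi := fun j => proj1_sig (constructive_indefinite_description _ (H j))).
  assert (Hphi : forall j, In (phi j) l /\ P j (phi j)).
  { intros j. unfold phi. destruct (constructive_indefinite_description _ (H j)). simpl. exact a. }
  set (L := map phi (seq 0 (S (length l)))).
  assert (HL : length L = S (length l)) by (unfold L; rewrite length_map, length_seq; reflexivity).
  assert (Hn : forall i, (i < S (length l))%nat -> nth i L (phi O) = phi i).
  { intros i Hi. unfold L. rewrite map_nth. rewrite seq_nth by exact Hi. reflexivity. }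
  destruct (classic (exists i j, (i < S (length l))%nat /\ (j < S (length l))%nat /\ i <> j /\ phi i = phi j))
    as [(i & j & Hi & Hj & Hij & Heq)|Hno].
  - destruct (Nat.lt_gt_cases i j) as [[Hlt|Hlt] _].
    + exact Hij.
    + exists i, j, (phi i). split; [exact Hlt|]. split; [apply Hphi|]. rewrite Heq. apply Hphi.
    + exists j, i, (phi j). split; [exact Hlt|]. split; [apply Hphi|]. rewrite <- Heq. apply Hphi.
  - exfalso.
    assert (HND : NoDup L).
    { apply (NoDup_nth L (phi O)). intros i j Hi Hj E. rewrite HL in Hi, Hj.
      rewrite !Hn in E by assumption. apply NNPP. intro Hne. apply Hno. exists i, j. auto. }
    assert (Hinc : incl L l).
    { intros c Hc. unfold L in Hc. apply in_map_iff in Hc. destruct Hc as (j & <- & _). apply Hphi. }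
    pose proof (NoDup_incl_length HND Hinc). lia.
Qed.

Lemma ball_open (X : Type) (d : X -> X -> R) (Hm : is_metric d) c e :
  is_open d (fun y => d c y < e).
Proof.
  intros x Hx. exists (e - d c x). split; [lra|].
  intros y Hy. pose proof (d_tri Hm c x y). lra.
Qed.

Lemma recur (X : Type) (d : X -> X -> R) (Hm : is_metric d) (Hc : is_compact d)
  (f : homeo d) (He : equicontinuous f) x r (hr : 0 < r) (N : nat) :
  exists m, (N < m)%nat /\ d (Nat.iter m (hmap f) x) x <= r.
Proof.
  destruct (He r hr) as (de & Hde & Heq).
  destruct (Hc X (fun c y => d c y < de / 2)) as [l Hl].
  - intros c. apply ball_open; exact Hm.
  - intros y. exists y. rewrite d_refl by exact Hm. lra.
  - set (M := S N).
    destruct (@pigeon X l (fun j c => d c (Nat.iter (j * M) (hmap f) x) < de / 2)) as (i & j & c & Hij & Hi & Hj).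
    { intros j. destruct (Hl (Nat.iter (j * M) (hmap f) x)) as (c & Hc1 & Hc2). exists c. auto. }
    assert (Hd : d (Nat.iter (i * M) (hmap f) x) (Nat.iter (j * M) (hmap f) x) <= de).
    { pose proof (d_tri Hm (Nat.iter (i * M) (hmap f) x) c (Nat.iter (j * M) (hmap f) x)).
      rewrite (d_sym Hm _ c) in H. lra. }
    specialize (Heq _ _ Hd (- Z.of_nat (i * M))%Z).
    replace (j * M)%nat with (i * M + (j - i) * M)%nat in Heq by nia.
    rewrite iter_add in Heq. rewrite !ziter_back in Heq.
    exists ((j - i) * M)%nat. split; [unfold M; nia|]. rewrite d_sym by exact Hm. exact Heq.
Qed.

Definition idx (k t : nat) : nat :=
  if Nat.leb t k then t else if Nat.leb t (2 * k) then (2 * k - t)%nat else O.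

Lemma idx_step k t :
  idx k (S t) = idx k t \/ (idx k (S t) = S (idx k t) /\ (idx k t < k)%nat) \/
  (idx k t = S (idx k (S t)) /\ (idx k (S t) < k)%nat).
Proof.
  unfold idx.
  destruct (Nat.leb_spec (S t) k); destruct (Nat.leb_spec t k);
  destruct (Nat.leb_spec (S t) (2 * k)); destruct (Nat.leb_spec t (2 * k)); lia.
Qed.

Lemma idx_ge k t : (2 * k <= t)%nat -> idx k t = O.
Proof.
  intros H. unfold idx.
  destruct (Nat.leb_spec t k); destruct (Nat.leb_spec t (2 * k)); lia.
Qed.

Lemma idx_le k t : (t <= k)%nat -> idx k t = t.
Proof. intros H. unfold idx. destruct (Nat.leb_spec t k); lia. Qed.

Lemma close_iter_bound (X : Type) (d : X -> X -> R) (Hm : is_metric d) (f : homeo d) r (hr : 0 <= r) a b :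
  a = b \/ close f r a b \/ close f r b a ->
  forall n, d (Nat.iter n (hmap f) a) (Nat.iter n (hmap f) b) <= r.
Proof.
  intros [<-|[H|H]] n.
  - rewrite d_refl by exact Hm. exact hr.
  - rewrite <- !ziter_pos. apply H.
  - rewrite d_sym by exact Hm. rewrite <- !ziter_pos. apply H.
Qed.

Lemma diam (X : Type) (d : X -> X -> R) (Hm : is_metric d) (Hc : is_compact d)
  (f : homeo d) (He : equicontinuous f) (Hs : strict_periodic_shadowing f) eta (heta : 0 < eta) :
  exists r, 0 < r /\ forall x y, ch f r x y -> d x y <= eta.
Proof.
  destruct (He (eta / 2)) as (de & Hde & Heq); [lra|].
  set (es := Rmin de (eta / 2)).
  assert (Hes : 0 < es) by (unfold es; apply Rmin_glb_lt; lra).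
  destruct (Hs es Hes) as (ds & Hds & Hsh).
  exists ds. split; [exact Hds|].
  intros x y Hxy. destruct (ch_seq Hxy) as (k & z & Hz0 & Hzk & Hzs).
  destruct (recur Hm Hc He x Hds (2 * k)) as (m & Hm1 & Hm2).
  set (w := fun t => if Nat.eqb t m then x else Nat.iter t (hmap f) (z (idx k t))).
  destruct (Hsh w m) as (p & _ & Hp).
  - split; [lia|]. split.
    + intros t Ht. unfold w.
      destruct (Nat.eqb_spec t m); [lia|].
      destruct (Nat.eqb_spec (S t) m) as [E|E].
      * rewrite idx_ge by lia. rewrite Hz0. change (hmap f (Nat.iter t (hmap f) x)) with (Nat.iter (S t) (hmap f) x).
        rewrite E. exact Hm2.
      * change (hmap f (Nat.iter t (hmap f) (z (idx k t)))) with (Nat.iter (S t) (hmap f) (z (idx k t))).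
        apply close_iter_bound; [exact Hm|lra|].
        destruct (idx_step k t) as [E1|[[E1 E2]|[E1 E2]]].
        -- left. rewrite E1. reflexivity.
        -- right; left. rewrite E1. apply Hzs. exact E2.
        -- right; right. rewrite E1. apply Hzs. exact E2.
    + unfold w. destruct (Nat.eqb_spec O m); [lia|]. rewrite Nat.eqb_refl. simpl. exact Hz0.
  - assert (H0 := Hp O ltac:(lia)). assert (Hk := Hp k ltac:(lia)).
    unfold w in H0, Hk.
    destruct (Nat.eqb_spec O m); [lia|]. destruct (Nat.eqb_spec k m); [lia|].
    rewrite idx_le in H0 by lia. simpl in H0. rewrite Hz0 in H0. rewrite idx_le in Hk by lia. rewrite Hzk in Hk.
    assert (Hk' : d (Nat.iter k (hmap f) y) (Nat.iter k (hmap f) p) <= de).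
    { assert (es <= de) by (unfold es; apply Rmin_l). lra. }
    specialize (Heq _ _ Hk' (- Z.of_nat k)%Z). rewrite !ziter_back in Heq.
    assert (es <= eta / 2) by (unfold es; apply Rmin_r).
    pose proof (d_tri Hm x p y). rewrite (d_sym Hm p y) in H1. lra.
Qed.

Lemma min_nat (P : nat -> Prop) n : P n -> exists j, P j /\ forall i, (i < j)%nat -> ~ P i.
Proof.
  induction n as [n IH] using lt_wf_ind. intros Hn.
  destruct (classic (exists i, (i < n)%nat /\ P i)) as [(i & Hi & HP)|Hno].
  - exact (IH i Hi HP).
  - exists n. split; [exact Hn|]. intros i Hi HP. apply Hno. eauto.
Qed.

Lemma fold_min_pos (A : Type) (g : A -> R) (l : list A) :
  (forall a, In a l -> 0 < g a) -> 0 < fold_right (fun a acc => Rmin (g a) acc) 1 l.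
Proof.
  induction l as [|a l IH]; simpl; intros H; [lra|].
  apply Rmin_glb_lt; auto.
Qed.

Lemma fold_min_le (A : Type) (g : A -> R) (l : list A) a :
  In a l -> fold_right (fun a acc => Rmin (g a) acc) 1 l <= g a.
Proof.
  induction l as [|b l IH]; simpl; intros H; [contradiction|].
  destruct H as [<-|H]; [apply Rmin_l|]. eapply Rle_trans; [apply Rmin_r|auto].
Qed.

Lemma lebesgue (X : Type) (d : X -> X -> R) (Hm : is_metric d) (Hc : is_compact d)
  (cover : list (X -> Prop)) (Hop : forall U, In U cover -> is_open d U)
  (Hcov : forall x, exists U, In U cover /\ U x) :
  exists lam, 0 < lam /\ forall x, exists U, In U cover /\ forall y, d x y < lam -> U y.
Proof.
  set (I := {p : X * R | 0 < snd p /\ exists U, In U cover /\ forall y, d (fst p) y < snd p -> U y}).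
  destruct (Hc I (fun i y => d (fst (proj1_sig i)) y < snd (proj1_sig i) / 2)) as [l Hl].
  - intros i. apply ball_open. exact Hm.
  - intros x. destruct (Hcov x) as (U & HU & Ux).
    destruct (Hop U HU x Ux) as (r & Hr & Hball).
    assert (Hp : 0 < snd (x, r) /\ exists U, In U cover /\ forall y, d (fst (x, r)) y < snd (x, r) -> U y).
    { simpl. split; [exact Hr|]. exists U. auto. }
    exists (exist _ (x, r) Hp). simpl. rewrite d_refl by exact Hm. lra.
  - set (g := fun i : I => snd (proj1_sig i) / 2).
    exists (fold_right (fun a acc => Rmin (g a) acc) 1 l). split.
    + apply fold_min_pos. intros a _. unfold g. destruct a as [p [Hr H0]]. simpl. lra.
    + intros x. destruct (Hl x) as (i & Hi & Hx).
      pose proof (@fold_min_le _ g l i Hi) as Hle.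
      destruct i as [[c r] [Hr (U & HU & Hball)]]. simpl in *.
      exists U. split; [exact HU|]. intros y Hy. apply Hball.
      unfold g in Hle. simpl in Hle.
      unfold g in Hy. pose proof (d_tri Hm c x y). lra.
Qed.

Lemma close_of_eq (X : Type) (d : X -> X -> R) (f : homeo d) r rho :
  (forall x y, d x y <= rho -> forall i : Z, d (ziter f i x) (ziter f i y) <= r) ->
  forall x y, d x y <= rho -> close f r x y.
Proof. intros H x y Hxy. exact (H x y Hxy). Qed.

Lemma dim0 (X : Type) (d : X -> X -> R) (Hm : is_metric d) (Hc : is_compact d) (Hne : inhabited X)
  (f : homeo d) (He : equicontinuous f) (Hs : strict_periodic_shadowing f) :
  covering_dim_le0 d.
Proof.
  intros cover Hop Hcov.
  destruct (lebesgue Hm Hc cover Hop Hcov) as (lam & Hlam & Hleb).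
  destruct (diam Hm Hc He Hs (eta := lam / 2)) as (r & Hr & Hdiam); [lra|].
  destruct (He r Hr) as (rho & Hrho & Heq).
  pose proof (@close_of_eq _ _ f r rho Heq) as Hcl.
  destruct (Hc X (fun x => ch f r x)) as [l Hl].
  - intros x y Hy. exists rho. split; [exact Hrho|].
    intros w Hw. eapply ch_step; [exact Hy|]. apply Hcl. lra.
  - intros x. exists x. apply ch_refl.
  - destruct Hne as [x0].
    set (C := fun j => ch f r (nth j l x0)).
    set (V := fun j y => C j y /\ forall i, (i < j)%nat -> ~ C i y).
    exists (map V (seq 0 (length l))).
    assert (Hnth : forall j, (j < length l)%nat -> nth j (map V (seq 0 (length l))) (fun _ => False) = V j).
    { intros j Hj. rewrite (nth_indep _ (fun _ => False) (V O)) by (rewrite length_map, length_seq; exact Hj).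
      rewrite map_nth, seq_nth by exact Hj. reflexivity. }
    split; [|split; [|split]].
    + intros V' HV'. apply in_map_iff in HV'. destruct HV' as (j & <- & _).
      intros y [Hy Hny]. exists rho. split; [exact Hrho|].
      intros w Hw. assert (Hyw : close f r y w) by (apply Hcl; lra).
      split.
      * eapply ch_step; [exact Hy|exact Hyw].
      * intros i Hi Hwi. apply (Hny i Hi). eapply ch_step; [exact Hwi|]. apply close_sym; [exact Hm|exact Hyw].
    + intros y. destruct (Hl y) as (x & Hx & Hxy).
      destruct (In_nth l x x0 Hx) as (n & Hn & Hnx).
      assert (HCn : C n y) by (unfold C; rewrite Hnx; exact Hxy).
      destruct (min_nat (fun j => C j y) n HCn) as (j & Hj & Hmin).
      assert (Hjn : (j <= n)%nat).
      { destruct (Nat.le_gt_cases j n); auto. exfalso. exact (Hmin n H HCn). }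
      exists (V j). split.
      * apply in_map. apply in_seq. lia.
      * split; [exact Hj|exact Hmin].
    + intros V' HV'. apply in_map_iff in HV'. destruct HV' as (j & <- & _).
      destruct (Hleb (nth j l x0)) as (U & HU & HUb).
      exists U. split; [exact HU|]. intros y [Hy _]. apply HUb.
      pose proof (Hdiam _ _ Hy). lra.
    + intros i j x Hi Hj Hij Hxi Hxj.
      rewrite length_map, length_seq in Hi, Hj.
      rewrite Hnth in Hxi, Hxj by assumption.
      destruct Hxi as [Hci Hni]. destruct Hxj as [Hcj Hnj].
      destruct (Nat.lt_gt_cases i j) as [[H|H] _]; [exact Hij| |].
      * exact (Hnj i H Hci).
      * exact (Hni j H Hcj).
Qed.

Lemma per_mult (X : Type) (d : X -> X -> R) (f : homeo d) r p y :
  ch f r (Nat.iter p (hmap f) y) y -> forall n, ch f r (Nat.iter (n * p) (hmap f) y) y.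
Proof.
  intros H n. induction n as [|n IH]; [apply ch_refl|].
  replace (S n * p)%nat with (n * p + p)%nat by lia. rewrite iter_add.
  eapply ch_trans; [|exact IH]. apply ch_iter_iff. exact H.
Qed.

Definition Sset (X : Type) (d : X -> X -> R) (f : homeo d) r (y : X) : X -> Prop :=
  fun z => exists i, ch f r z (Nat.iter i (hmap f) y).

Lemma S_eq (X : Type) (d : X -> X -> R) (Hm : is_metric d) (f : homeo d) r
  (Hper : forall y, exists p, (1 <= p)%nat /\ ch f r (Nat.iter p (hmap f) y) y) y y' j :
  ch f r y' (Nat.iter j (hmap f) y) -> Sset f r y' = Sset f r y.
Proof.
  intros H. apply functional_extensionality. intros z. apply propositional_extensionality.
  unfold Sset. split.
  - intros (i & Hi). exists (i + j)%nat. rewrite iter_add.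
    eapply ch_trans; [exact Hi|]. apply ch_iter_iff. exact H.
  - intros (i & Hi). destruct (Hper y) as (p & Hp1 & Hp).
    exists (i + j * (p - 1))%nat.
    eapply ch_trans; [exact Hi|].
    apply ch_sym; [exact Hm|].
    eapply ch_trans; [apply ch_iter_iff; exact H|].
    rewrite <- iter_add.
    replace (i + j * (p - 1) + j)%nat with (i + j * p)%nat by nia.
    rewrite iter_add. apply ch_iter_iff. apply per_mult. exact Hp.
Qed.

Lemma top_stable (X : Type) (d : X -> X -> R) (Hm : is_metric d) (Hc : is_compact d) (Hne : inhabited X)
  (f : homeo d) (He : equicontinuous f) (Hs : strict_periodic_shadowing f) :
  topologically_stable f.
Proof.
  intros eps Heps.
  set (e1 := eps / 4).
  destruct (Hs e1) as (ds & Hds & Hsh); [unfold e1; lra|].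
  set (d1 := Rmin ds e1).
  assert (Hd1 : 0 < d1) by (unfold d1, e1; apply Rmin_glb_lt; lra).
  assert (Hd1s : d1 <= ds) by apply Rmin_l.
  assert (Hd1e : d1 <= e1) by apply Rmin_r.
  destruct (diam Hm Hc He Hs Hd1) as (r & Hr & Hdiam).
  destruct (He r Hr) as (rho & Hrho & Heq).
  pose proof (@close_of_eq _ _ f r rho Heq) as Hcl.
  exists rho. split; [exact Hrho|].
  intros g (s1 & s2 & Hs1 & Hs2 & Hmax).
  set (F := fun n => Nat.iter n (hmap f)).
  set (sim := ch f r).
  assert (Hfg : forall y, sim (hmap g y) (hmap f y)).
  { intros y. apply ch_close. apply close_sym; [exact Hm|]. apply Hcl.
    destruct Hs1 as [Hub _]. assert (d (hmap f y) (hmap g y) <= s1) by (apply Hub; eauto).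
    pose proof (Rmax_l s1 s2). lra. }
  assert (Hper : forall y, exists p, (1 <= p)%nat /\ sim (F p y) y).
  { intros y. destruct (recur Hm Hc He y Hrho O) as (m & Hm1 & Hm2).
    exists m. split; [lia|]. apply ch_close. apply Hcl. exact Hm2. }
  set (b := fun y => epsilon Hne (Sset f r y)).
  assert (Hb : forall y, Sset f r y (b y)).
  { intros y. unfold b. apply epsilon_spec. exists y. exists O. apply ch_refl. }
  assert (Hbeq : forall y y' j, sim y' (F j y) -> b y' = b y).
  { intros y y' j H. unfold b. rewrite (@S_eq _ _ Hm f r Hper y y' j H). reflexivity. }
  assert (Hbof : forall y, exists i, sim y (F i (b y))).
  { intros y. destruct (Hb y) as (i0 & Hi0).
    assert (E := @S_eq _ _ Hm f r Hper y (b y) i0 Hi0).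
    assert (Hy : Sset f r y y) by (exists O; apply ch_refl).
    rewrite <- E in Hy. exact Hy. }
  set (Pp := fun z p => (1 <= p)%nat /\ sim (F p z) z /\ forall q, (1 <= q)%nat -> (q < p)%nat -> ~ sim (F q z) z).
  set (per := fun z => epsilon (inhabits 1%nat) (Pp z)).
  assert (Hper_spec : forall z, (1 <= per z)%nat /\ sim (F (per z) z) z /\
            forall q, (1 <= q)%nat -> (q < per z)%nat -> ~ sim (F q z) z).
  { intros z. apply (epsilon_spec (inhabits 1%nat) (Pp z)).
    destruct (Hper z) as (p & Hp1 & Hp).
    destruct (min_nat (fun p => (1 <= p)%nat /\ sim (F p z) z) p (conj Hp1 Hp)) as (q & [Hq1 Hq] & Hmin).
    exists q. split; [exact Hq1|]. split; [exact Hq|]. intros q' H1 H2 H3. exact (Hmin q' H2 (conj H1 H3)). }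
  set (PQ := fun z q => F (per z) q = q /\
                forall i, (i < per z)%nat -> d (F i z) (F i q) <= e1).
  set (Q := fun z => epsilon Hne (PQ z)).
  assert (HQ : forall z, F (per z) (Q z) = Q z /\
                forall i, (i < per z)%nat -> d (F i z) (F i (Q z)) <= e1).
  { intros z. apply (epsilon_spec Hne (PQ z)).
    destruct (Hper_spec z) as (Hp1 & Hp & _).
    set (P := per z).
    destruct (Hsh (fun i => if Nat.eqb i P then z else F i z) P) as (q & Hq1 & Hq2).
    - split; [exact Hp1|]. split.
      + intros i Hi. destruct (Nat.eqb_spec i P); [lia|].
        destruct (Nat.eqb_spec (S i) P) as [E|E].
        * change (hmap f (F i z)) with (F (S i) z). rewrite E.
          pose proof (Hdiam _ _ Hp). unfold P. lra.
        * change (hmap f (F i z)) with (F (S i) z). rewrite d_refl by exact Hm. lra.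
      + destruct (Nat.eqb_spec O P); [lia|]. rewrite Nat.eqb_refl. reflexivity.
    - exists q. split; [exact Hq1|]. intros i Hi.
      specialize (Hq2 i ltac:(lia)). destruct (Nat.eqb_spec i P); [lia|]. exact Hq2. }
  assert (Huniq : forall y i i', (i < per (b y))%nat -> (i' < per (b y))%nat ->
             sim y (F i (b y)) -> sim y (F i' (b y)) -> i = i').
  { intros y i i' Hi Hi' H H'.
    assert (Hgen : forall a a', (a < a')%nat -> (a' < per (b y))%nat ->
               sim y (F a (b y)) -> sim y (F a' (b y)) -> False).
    { intros a a' Ha Ha' Ka Ka'.
      destruct (Hper_spec (b y)) as (_ & _ & Hmin).
      apply (Hmin (a' - a)%nat); [lia|lia|].
      assert (K : sim (F a (b y)) (F a' (b y))).
      { eapply ch_trans; [apply ch_sym; [exact Hm|exact Ka]|exact Ka']. }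
      unfold F in K. replace a' with (a + (a' - a))%nat in K by lia.
      rewrite iter_add in K. apply ch_iter_iff in K. apply ch_sym; [exact Hm|exact K]. }
    destruct (Nat.lt_total i i') as [Hlt|[Heq'|Hlt]]; [exfalso; eauto|exact Heq'|exfalso; eauto]. }
  set (Pi := fun y i => (i < per (b y))%nat /\ sim y (F i (b y))).
  set (ind := fun y => epsilon (inhabits O) (Pi y)).
  assert (Hind : forall y, (ind y < per (b y))%nat /\ sim y (F (ind y) (b y))).
  { intros y. apply (epsilon_spec (inhabits O) (Pi y)).
    destruct (Hbof y) as (i & Hi).
    destruct (Hper_spec (b y)) as (Hp1 & Hp & _).
    set (p := per (b y)) in *.
    exists (i mod p)%nat. split; [apply Nat.mod_upper_bound; lia|].
    eapply ch_trans; [exact Hi|].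
    assert (E : i = (i mod p + (i / p) * p)%nat).
    { pose proof (Nat.div_mod_eq i p). lia. }
    assert (K : sim (F (i mod p + i / p * p)%nat (b y)) (F (i mod p) (b y))).
    { unfold F. rewrite iter_add. apply ch_iter_iff. apply per_mult. exact Hp. }
    rewrite <- E in K. exact K. }
  exists (fun y => F (ind y) (Q (b y))).
  split; [|split].
  -
    intros x e He0. exists rho. split; [exact Hrho|].
    intros y Hxy. assert (Hs' : sim y x).
    { apply ch_close. apply close_sym; [exact Hm|]. apply Hcl. lra. }
    assert (Eb : b y = b x) by (apply (Hbeq x y O); exact Hs').
    assert (Ei : ind y = ind x).
    { destruct (Hind x) as [H1 H2]. destruct (Hind y) as [H3 H4].
      apply (Huniq y (ind y) (ind x)).
      - exact H3.
      - rewrite Eb. exact H1.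
      - exact H4.
      - eapply ch_trans; [exact Hs'|]. rewrite Eb. exact H2. }
    rewrite Eb, Ei, d_refl by exact Hm. exact He0.
  -
    assert (Hbnd : forall y, d (F (ind y) (Q (b y))) y <= eps / 2).
    { intros y. destruct (Hind y) as [H1 H2]. destruct (HQ (b y)) as [_ HQ2].
      specialize (HQ2 _ H1).
      pose proof (Hdiam _ _ H2) as H3.
      pose proof (d_tri Hm (F (ind y) (Q (b y))) (F (ind y) (b y)) y) as H4.
      rewrite (d_sym Hm (F (ind y) (b y))) in HQ2.
      rewrite (d_sym Hm y) in H3. unfold e1 in *. lra. }
    set (E := fun s => exists x, s = d (F (ind x) (Q (b x))) x).
    destruct (completeness E) as [s Hsl].
    + exists (eps / 2). intros s (x & ->). apply Hbnd.
    + destruct Hne as [x0]. exists (d (F (ind x0) (Q (b x0))) x0). exists x0. reflexivity.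
    + exists s. split; [exact Hsl|].
      destruct Hsl as [_ Hleast].
      assert (s <= eps / 2) by (apply Hleast; intros t (x & ->); apply Hbnd). lra.
  -
    intros y.
    destruct (Hind y) as [H1 H2].
    assert (Hgy : sim (hmap g y) (F 1%nat y)) by apply Hfg.
    assert (Eb : b (hmap g y) = b y) by (apply (Hbeq y _ 1%nat); exact Hgy).
    assert (Hg2 : sim (hmap g y) (F (S (ind y)) (b y))).
    { eapply ch_trans; [exact Hgy|]. change (F 1%nat y) with (hmap f y). apply ch_f. exact H2. }
    destruct (Hper_spec (b y)) as (Hp1 & Hp & _).
    rewrite Eb.
    destruct (Nat.eq_dec (S (ind y)) (per (b y))) as [E|E].
    + assert (Ei : ind (hmap g y) = O).
      { apply (Huniq (hmap g y) (ind (hmap g y)) O).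
        * apply Hind.
        * rewrite Eb. lia.
        * apply Hind.
        * rewrite Eb. simpl. eapply ch_trans; [exact Hg2|]. rewrite E. exact Hp. }
      rewrite Ei. destruct (HQ (b y)) as [HQ1 _]. simpl.
      change (hmap f (F (ind y) (Q (b y)))) with (F (S (ind y)) (Q (b y))).
      rewrite E. symmetry. exact HQ1.
    + assert (Ei : ind (hmap g y) = S (ind y)).
      { apply (Huniq (hmap g y) (ind (hmap g y)) (S (ind y))).
        * apply Hind.
        * rewrite Eb. lia.
        * apply Hind.
        * rewrite Eb. exact Hg2. }
      rewrite Ei. reflexivity.
Qed.

Theorem theorem1p2 (X : Type) (d : X -> X -> R)
  (Hmetric : is_metric d) (Hcompact : is_compact d) (Hne : inhabited X)
  (f : homeo d) (Hequi : equicontinuous f) :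
  strict_periodic_shadowing f -> topologically_stable f /\ dim_eq0 d.
Proof.
  intros Hs. split.
  - exact (top_stable Hmetric Hcompact Hne Hequi Hs).
  - split; [exact (dim0 Hmetric Hcompact Hne Hequi Hs)|exact Hne].
Qed.
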